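(* There is an absolute constant $c$ such that the following holds. Let $\mu>0$, $n$ be such that $n_0:=n-\mu^2/4-1/2>0$, and let $\ell_0<\ell_1<n_0$ be nonnegative integers; write $k=n_0-\ell$, $k_0=n_0-\ell_0$, $k_1=n_0-\ell_1$. For $0\le\ell<n_0$ let $$\rho_\ell=\sqrt{\frac{\mu^2/4}{\mu^2/4+n_0-\ell}}+i\sqrt{\frac{n_0-\ell}{\mu^2/4+n_0-\ell}},\qquad\eta_\ell=\rho_0^2\rho_1^2\cdots\rho_\ell^2 .$$ Then for any complex numbers $g_{\ell_0},\dots,g_{\ell_1}$, $$\Big|\Re\sum_{\ell=\ell_0}^{\ell_1}g_\ell\eta_\ell\Big|\le c\big(\mu k_1^{-1/2}+1\big)|g_{\ell_1}|+c\sum_{\ell=\ell_0}^{\ell_1-1}\big(\mu k^{-1/2}+1\big)|g_{\ell+1}-g_\ell|,$$ $$\Big|\Re\sum_{\ell=\ell_0}^{\ell_1}g_\ell\eta_\ell^2\Big|\le c\big(\mu k_1^{-1/2}+\mu^{-1}k_0^{1/2}\big)|g_{\ell_1}|+c\sum_{\ell=\ell_0}^{\ell_1-1}\big(\mu k^{-1/2}+\mu^{-1}k_0^{1/2}\big)|g_{\ell+1}-g_\ell|.$$ *)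

(* Defs.v *)
From Stdlib Require Import Reals.
Open Scope R_scope.

Definition Cx : Type := (R * R)%type.
Definition Cre (z : Cx) : R := fst z.
Definition Cim (z : Cx) : R := snd z.
Definition Cmul (z w : Cx) : Cx :=
  (Cre z * Cre w - Cim z * Cim w, Cre z * Cim w + Cim z * Cre w).
Definition Csub (z w : Cx) : Cx := (Cre z - Cre w, Cim z - Cim w).
Definition Cmod (z : Cx) : R := sqrt (Cre z ^ 2 + Cim z ^ 2).
Definition Csum (s m : nat) (f : nat -> Cx) : Cx :=
  (sum_f s m (fun l => Cre (f l)), sum_f s m (fun l => Cim (f l))).

Definition n0_of (mu n : R) : R := n - mu ^ 2 / 4 - 1 / 2.

Definition rho (mu n : R) (l : nat) : Cx :=
  let n0 := n0_of mu n in
  (sqrt ((mu ^ 2 / 4) / (mu ^ 2 / 4 + n0 - INR l)),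
   sqrt ((n0 - INR l) / (mu ^ 2 / 4 + n0 - INR l))).

Fixpoint eta (mu n : R) (l : nat) : Cx :=
  match l with
  | O => Cmul (rho mu n 0) (rho mu n 0)
  | S l' => Cmul (eta mu n l') (Cmul (rho mu n l) (rho mu n l))
  end.

(* Main.v *)
Require Import Defs.
From Stdlib Require Import Reals Lra Lia Psatz.
Open Scope R_scope.

Definition Cadd (z w : Cx) : Cx := (Cre z + Cre w, Cim z + Cim w).
Definition CSR (f : nat -> Cx) (m : nat) : Cx :=
  (sum_f_R0 (fun t => Cre (f t)) m, sum_f_R0 (fun t => Cim (f t)) m).

Lemma Cx_eq (z w : Cx) : Cre z = Cre w -> Cim z = Cim w -> z = w.
Proof. destruct z, w; simpl; intros; subst; reflexivity. Qed.

Lemma Cmod_ge0 z : 0 <= Cmod z.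
Proof. apply sqrt_pos. Qed.

Lemma Cmod_mul z w : Cmod (Cmul z w) = Cmod z * Cmod w.
Proof.
  unfold Cmod. rewrite <- sqrt_mult by nra. f_equal.
  unfold Cmul, Cre, Cim; simpl; ring.
Qed.

Lemma Cmod_sq z : Cmod z ^ 2 = Cre z ^ 2 + Cim z ^ 2.
Proof. unfold Cmod. apply pow2_sqrt. nra. Qed.

Lemma Cmod_add_le z w : Cmod (Cadd z w) <= Cmod z + Cmod w.
Proof.
  pose proof (Cmod_sq z) as Hz. pose proof (Cmod_sq w) as Hw.
  pose proof (Cmod_ge0 z). pose proof (Cmod_ge0 w).
  destruct z as [a b]; destruct w as [c d]; unfold Cre, Cim in Hz, Hw; simpl fst in Hz, Hw; simpl snd in Hz, Hw.
  assert (HC : (a*c+b*d) <= Cmod (a,b) * Cmod (c,d)).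
  { assert ((a*c+b*d)^2 <= (Cmod (a,b) * Cmod (c,d))^2).
    { replace ((Cmod (a,b) * Cmod (c,d))^2) with (Cmod (a,b)^2 * Cmod (c,d)^2) by ring.
      rewrite Hz, Hw. pose proof (pow2_ge_0 (a*d-b*c)). nra. }
    assert (0 <= Cmod (a,b) * Cmod (c,d)) by (apply Rmult_le_pos; assumption).
    destruct (Rle_or_lt (a*c+b*d) (Cmod (a,b) * Cmod (c,d))); auto. nra. }
  unfold Cadd; unfold Cmod at 1; simpl.
  rewrite <- (sqrt_pow2 (Cmod (a, b) + Cmod (c, d))) by lra.
  apply sqrt_le_1_alt. nra.
Qed.

Lemma Cmod_opp z : Cmod (- Cre z, - Cim z) = Cmod z.
Proof. unfold Cmod; simpl; f_equal; ring. Qed.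

Lemma Cmod_sub_le z w : Cmod (Csub z w) <= Cmod z + Cmod w.
Proof.
  replace (Csub z w) with (Cadd z (- Cre w, - Cim w)).
  - rewrite <- (Cmod_opp w). apply Cmod_add_le.
  - unfold Cadd, Csub; simpl. f_equal; ring.
Qed.

Lemma Rabs_Cre_le z : Rabs (Cre z) <= Cmod z.
Proof.
  rewrite <- sqrt_Rsqr_abs. unfold Cmod. apply sqrt_le_1_alt. unfold Rsqr. nra.
Qed.

Lemma Cmod_half c : Cmod (1/2, c) <= 1/2 + Rabs c.
Proof.
  unfold Cmod; simpl.
  rewrite <- (sqrt_pow2 (1/2 + Rabs c)) by (pose proof (Rabs_pos c); lra).
  apply sqrt_le_1_alt. pose proof (Rabs_pos c).
  assert (c^2 = Rabs c ^2) by (rewrite <- pow2_abs; reflexivity). nra.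
Qed.

Lemma Cmod_dd u v : Cmod (Csub (1/2, u) (1/2, v)) = Rabs (u - v).
Proof.
  unfold Cmod, Csub; simpl. rewrite <- sqrt_Rsqr_abs. f_equal. unfold Rsqr; ring.
Qed.

Lemma Cmod_0 : Cmod (0,0) = 0.
Proof. unfold Cmod, Cre, Cim; simpl fst; simpl snd. replace (0^2+0^2) with 0 by ring. apply sqrt_0. Qed.

Lemma inner (E : nat -> Cx) (c : nat -> R) (a b : nat)
 (H : forall j, (j <= b)%nat -> E (S j) = Cmul (Csub (E (S j)) (E j)) (1/2, c j))
 (Hc : forall j, (j < b)%nat -> c (S j) <= c j)
 (HE : forall j, (j <= S b)%nat -> Cmod (E j) <= 1) :
 forall i, (i + a <= b)%nat -> exists Rm, CSR (fun t => E (S (t + a)%nat)) i =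
   Csub (Csub (Cmul (E (S (i + a)%nat)) (1/2, c (i+a)%nat)) (Cmul (E a) (1/2, c a))) Rm
   /\ Cmod Rm <= c a - c (i + a)%nat.
Proof.
  induction i; intros Hi.
  - exists (0,0). split.
    + simpl. transitivity (Cmul (Csub (E (S a)) (E a)) (1/2, c a)).
      * rewrite <- (H a) by lia. apply Cx_eq; reflexivity.
      * apply Cx_eq; unfold Cmul, Csub, Cre, Cim; simpl; ring.
    + rewrite Cmod_0. simpl. lra.
  - destruct IHi as [R [HR HRb]]; [lia|].
    exists (Cadd R (Cmul (E (S (i + a)%nat)) (Csub (1/2, c (S i + a)%nat) (1/2, c (i + a)%nat)))).
    split.
    + assert (H1 := H (S i + a)%nat ltac:(lia)).
      transitivity (Cadd (CSR (fun t => E (S (t + a)%nat)) i) (E (S (S i + a)%nat))).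
      { apply Cx_eq; reflexivity. }
      rewrite HR.
      transitivity (Cadd (Csub (Csub (Cmul (E (S (i + a)%nat)) (1/2, c (i+a)%nat)) (Cmul (E a) (1/2, c a))) R)
        (Cmul (Csub (E (S (S i + a)%nat)) (E (S i + a)%nat)) (1/2, c (S i + a)%nat))).
      { rewrite <- H1. reflexivity. }
      apply Cx_eq; unfold Cadd, Cmul, Csub, Cre, Cim; simpl; ring.
    + eapply Rle_trans; [apply Cmod_add_le|].
      rewrite Cmod_mul, Cmod_dd.
      assert (Hm : c (S i + a)%nat <= c (i + a)%nat) by (apply Hc; lia).
      rewrite Rabs_left1 by lra.
      assert (Cmod (E (S (i + a)%nat)) <= 1) by (apply HE; lia).
      pose proof (Cmod_ge0 (E (S (i + a)%nat))).
      simpl in *. nra.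
Qed.

Lemma inner_bound (E : nat -> Cx) (c : nat -> R) (a b : nat)
 (H : forall j, (j <= b)%nat -> E (S j) = Cmul (Csub (E (S j)) (E j)) (1/2, c j))
 (Hc : forall j, (j < b)%nat -> c (S j) <= c j)
 (HE : forall j, (j <= S b)%nat -> Cmod (E j) <= 1) :
 forall i, (i + a <= b)%nat ->
   Cmod (CSR (fun t => E (S (t + a)%nat)) i) <= 1 + 2 * Rabs (c (i + a)%nat) + 2 * Rabs (c a).
Proof.
  intros i Hi. destruct (inner E c a b H Hc HE i Hi) as [R [HR HRb]].
  rewrite HR.
  eapply Rle_trans; [apply Cmod_sub_le|].
  eapply Rle_trans; [apply Rplus_le_compat_r; apply Cmod_sub_le|].
  rewrite !Cmod_mul.
  pose proof (Cmod_half (c (i + a)%nat)). pose proof (Cmod_half (c a)).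
  assert (Cmod (E (S (i + a)%nat)) <= 1) by (apply HE; lia).
  assert (Cmod (E a) <= 1) by (apply HE; lia).
  pose proof (Cmod_ge0 (E (S (i + a)%nat))). pose proof (Cmod_ge0 (E a)).
  pose proof (Cmod_ge0 (1/2, c (i+a)%nat)). pose proof (Cmod_ge0 (1/2, c a)).
  pose proof (Rle_abs (c a)). pose proof (Rle_abs (- c (i + a)%nat)).
  rewrite Rabs_Ropp in *. nra.
Qed.

Lemma outer (g v : nat -> Cx) (K : nat -> R) (a m : nat)
 (HK : forall i, (i <= S m)%nat -> Cmod (CSR (fun t => v (t + a)%nat) i) <= K (i + a)%nat) :
 Rabs (Cre (CSR (fun t => Cmul (g (t + a)%nat) (v (t + a)%nat)) (S m))) <=
   K (S m + a)%nat * Cmod (g (S m + a)%nat) +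
   sum_f_R0 (fun t => K (t + a)%nat * Cmod (Csub (g (S (t + a)%nat)) (g (t + a)%nat))) m.
Proof.
  set (A := fun j => CSR (fun t => v (t + a)%nat) j).
  set (F := fun t => K (t + a)%nat * Cmod (Csub (g (S (t + a)%nat)) (g (t + a)%nat))).
  assert (Inv : forall i, (i <= m)%nat -> exists Q,
     CSR (fun t => Cmul (g (t + a)%nat) (v (t + a)%nat)) (S i) = Csub (Cmul (g (S i + a)%nat) (A (S i))) Q
     /\ Cmod Q <= sum_f_R0 F i).
  { induction i; intros Hi.
    - exists (Cmul (Csub (g (S a)) (g a)) (A 0%nat)). split.
      + unfold A. apply Cx_eq; unfold CSR, Cmul, Csub, Cre, Cim; simpl; ring.
      + simpl. unfold F. rewrite Cmod_mul. simpl.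
        assert (Cmod (A 0%nat) <= K (0 + a)%nat) by (apply HK; lia). simpl in H.
        pose proof (Cmod_ge0 (Csub (g (S a)) (g a))). nra.
    - destruct IHi as [Q [HQ HQb]]; [lia|].
      exists (Cadd Q (Cmul (Csub (g (S (S i) + a)%nat) (g (S i + a)%nat)) (A (S i)))).
      split.
      + transitivity (Cadd (CSR (fun t => Cmul (g (t + a)%nat) (v (t + a)%nat)) (S i))
                           (Cmul (g (S (S i) + a)%nat) (v (S (S i) + a)%nat))).
        { apply Cx_eq; reflexivity. }
        rewrite HQ. unfold A.
        apply Cx_eq; unfold CSR, Cadd, Cmul, Csub, Cre, Cim; simpl; ring.
      + eapply Rle_trans; [apply Cmod_add_le|].
        rewrite Cmod_mul.
        assert (Cmod (A (S i)) <= K (S i + a)%nat) by (apply HK; lia).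
        pose proof (Cmod_ge0 (Csub (g (S (S i) + a)%nat) (g (S i + a)%nat))).
        replace (sum_f_R0 F (S i)) with (sum_f_R0 F i + K (S i + a)%nat * Cmod (Csub (g (S (S i) + a)%nat) (g (S i + a)%nat))) by reflexivity.
        nra. }
  destruct (Inv m (le_n m)) as [Q [HQ HQb]].
  rewrite HQ. eapply Rle_trans; [apply Rabs_Cre_le|].
  eapply Rle_trans; [apply Cmod_sub_le|].
  rewrite Cmod_mul.
  assert (Cmod (A (S m)) <= K (S m + a)%nat) by (apply HK; lia).
  pose proof (Cmod_ge0 (g (S m + a)%nat)).
  fold F. nra.
Qed.

Lemma rho_facts (mu n : R) (j : nat) : 0 < mu -> 0 < n0_of mu n - INR j ->
  Cre (rho mu n j) ^ 2 + Cim (rho mu n j) ^ 2 = 1 /\ 0 < Cre (rho mu n j) /\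
  0 < Cim (rho mu n j) /\
  Cre (rho mu n j) / Cim (rho mu n j) = mu / (2 * sqrt (n0_of mu n - INR j)).
Proof.
  intros Hmu Hk.
  assert (E : rho mu n j = (sqrt ((mu^2/4)/(mu^2/4 + (n0_of mu n - INR j))),
     sqrt ((n0_of mu n - INR j)/(mu^2/4 + (n0_of mu n - INR j))))).
  { unfold rho. f_equal; f_equal; f_equal; ring. }
  rewrite E; cbv [Cre Cim fst snd].
  set (k := n0_of mu n - INR j) in *.
  set (t := mu^2/4).
  assert (Ht : 0 < t) by (unfold t; pose proof (pow_lt mu 2 Hmu); lra).
  assert (Hs : 0 < t + k) by lra.
  split; [|split; [|split]].
  - rewrite !pow2_sqrt; [field; lra | apply Rlt_le, Rdiv_lt_0_compat; lra
                                     | apply Rlt_le, Rdiv_lt_0_compat; lra].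
  - apply sqrt_lt_R0, Rdiv_lt_0_compat; lra.
  - apply sqrt_lt_R0, Rdiv_lt_0_compat; lra.
  - rewrite !sqrt_div_alt by lra.
    assert (sqrt t = mu / 2).
    { unfold t. replace (mu^2/4) with ((mu/2)^2) by field. apply sqrt_pow2. lra. }
    rewrite H.
    assert (0 < sqrt (t + k)) by (apply sqrt_lt_R0; lra).
    assert (0 < sqrt k) by (apply sqrt_lt_R0; lra).
    field. lra.
Qed.

Lemma W_id (z : Cx) : Cre z ^2 + Cim z ^2 = 1 -> Cim z <> 0 ->
  Cmul (Csub (Cmul z z) (1,0)) (1/2, - (Cre z / Cim z)/2) = Cmul z z.
Proof.
  destruct z as [x y]; cbv [Cre Cim fst snd]. intros H1 Hy.
  apply Cx_eq; cbv [Cmul Csub Cre Cim fst snd].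
  - replace (x*x - y*y) with ((x*x - y*y - 1)*(1/2) - (x*y+y*x)*(-(x/y)/2) + (x^2+y^2-1)*(-1/2))
      at 2 by (field; auto).
    rewrite H1. ring.
  - replace (x*y+y*x) with ((x*x - y*y - 1)*(-(x/y)/2) + (x*y+y*x)*(1/2) + (x^2+y^2-1)*(x/(2*y)))
      at 2 by (field; auto).
    rewrite H1. field. auto.
Qed.

Lemma step_id (Ej Ej1 W D : Cx) : Ej1 = Cmul Ej W -> Cmul (Csub W (1,0)) D = W ->
  Ej1 = Cmul (Csub Ej1 Ej) D.
Proof.
  intros H1 H2. rewrite H1.
  transitivity (Cmul Ej (Cmul (Csub W (1,0)) D)).
  - rewrite H2; reflexivity.
  - apply Cx_eq; cbv [Cmul Csub Cre Cim fst snd]; ring.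
Qed.

Lemma Cmod_unit z : Cre z ^2 + Cim z ^2 = 1 -> Cmod z = 1.
Proof. intros H. unfold Cmod. rewrite H. apply sqrt_1. Qed.

Lemma partial_gen (z : nat -> Cx) (E : nat -> Cx) (a b : nat)
  (E0 : E 0%nat = (1,0))
  (ES : forall j, (j <= b)%nat -> E (S j) = Cmul (E j) (Cmul (z j) (z j)))
  (Hz : forall j, (j <= b)%nat -> Cre (z j)^2 + Cim (z j)^2 = 1 /\ Cim (z j) <> 0)
  (Hc : forall j, (j < b)%nat -> Cre (z j) / Cim (z j) <= Cre (z (S j)) / Cim (z (S j))) :
  forall i, (i + a <= b)%nat ->
   Cmod (CSR (fun t => E (S (t + a)%nat)) i) <=
     1 + 2 * Rabs (- (Cre (z (i+a)%nat) / Cim (z (i+a)%nat))/2)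
       + 2 * Rabs (- (Cre (z a) / Cim (z a))/2).
Proof.
  apply (inner_bound E (fun j => - (Cre (z j) / Cim (z j))/2) a b).
  - intros j Hj. apply step_id with (W := Cmul (z j) (z j)); [apply ES; auto|].
    destruct (Hz j Hj). apply W_id; auto.
  - intros j Hj. specialize (Hc j Hj). lra.
  - assert (forall j, (j <= S b)%nat -> Cmod (E j) = 1).
    { induction j; intros Hj.
      - rewrite E0. apply Cmod_unit. unfold Cre, Cim; simpl; ring.
      - rewrite ES by lia. rewrite Cmod_mul, IHj by lia. rewrite Cmod_mul.
        destruct (Hz j ltac:(lia)). rewrite Cmod_unit by auto. ring. }
    intros j Hj. rewrite H by auto. lra.
Qed.

Definition Eeta mu n j := match j with O => ((1,0) : Cx) | S j' => eta mu n j' end.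
Definition Eeta2 mu n j := match j with O => ((1,0) : Cx) | S j' => Cmul (eta mu n j') (eta mu n j') end.

Lemma div_mono mu a b : 0 < mu -> 0 < b -> b <= a -> mu/(2*a) <= mu/(2*b).
Proof. intros. unfold Rdiv. apply Rmult_le_compat_l; [lra|]. apply Rinv_le_contravar; lra. Qed.

Lemma ratio2 z : Cre z <> 0 -> Cim z <> 0 ->
  Cre (Cmul z z) / Cim (Cmul z z) = (Cre z / Cim z - / (Cre z / Cim z)) / 2.
Proof.
  destruct z as [x y]. cbv [Cmul Cre Cim fst snd]. intros. field. split; [auto|split; [auto|]].
  intro. assert (x*y = 0) by lra. apply Rmult_integral in H2. tauto.
Qed.

Lemma unit2 z : Cre z ^2 + Cim z ^2 = 1 -> Cre (Cmul z z)^2 + Cim (Cmul z z)^2 = 1.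
Proof.
  intros H. replace (Cre (Cmul z z)^2 + Cim (Cmul z z)^2) with ((Cre z ^2 + Cim z^2)^2).
  - rewrite H; ring.
  - cbv [Cmul Cre Cim fst snd]; ring.
Qed.

Lemma csum_shift a m (f : nat -> Cx) : Csum a (m + a) f = CSR (fun t => f (t + a)%nat) m.
Proof. unfold Csum, sum_f, CSR. replace (m + a - a)%nat with m by lia. reflexivity. Qed.

Lemma sum_f_shift a m (f : nat -> R) : sum_f a (m + a) f = sum_f_R0 (fun t => f (t + a)%nat) m.
Proof. unfold sum_f. replace (m + a - a)%nat with m by lia. reflexivity. Qed.

Theorem mainTheorem16 :
  exists c : R,
  forall (mu n : R) (l0 l1 : nat) (g : nat -> Cx),
    0 < mu ->
    0 < n0_of mu n ->
    (l0 < l1)%nat ->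
    INR l1 < n0_of mu n ->
    let n0 := n0_of mu n in
    let k := fun l : nat => n0 - INR l in
    let k0 := k l0 in
    let k1 := k l1 in
    Rabs (Cre (Csum l0 l1 (fun l => Cmul (g l) (eta mu n l))))
      <= c * (mu / sqrt k1 + 1) * Cmod (g l1)
         + c * sum_f l0 (l1 - 1)
                 (fun l => (mu / sqrt (k l) + 1) * Cmod (Csub (g (S l)) (g l)))
    /\
    Rabs (Cre (Csum l0 l1
                 (fun l => Cmul (g l) (Cmul (eta mu n l) (eta mu n l)))))
      <= c * (mu / sqrt k1 + sqrt k0 / mu) * Cmod (g l1)
         + c * sum_f l0 (l1 - 1)
                 (fun l => (mu / sqrt (k l) + sqrt k0 / mu)
                           * Cmod (Csub (g (S l)) (g l))).
Proof.
  exists 3. intros mu n l0 l1 g Hmu Hn0 Hl Hl1. cbv zeta.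
  set (kk := fun j : nat => n0_of mu n - INR j).
  assert (Hkpos : forall j, (j <= l1)%nat -> 0 < kk j).
  { intros j Hj. unfold kk. apply le_INR in Hj. lra. }
  assert (Hsk : forall j, (j <= l1)%nat -> 0 < sqrt (kk j)).
  { intros. apply sqrt_lt_R0. auto. }
  assert (Hskm : forall i j, (i <= j <= l1)%nat -> sqrt (kk j) <= sqrt (kk i)).
  { intros i j Hij. apply sqrt_le_1_alt. unfold kk. assert (INR i <= INR j) by (apply le_INR; lia). lra. }
  set (rr := fun j => mu / (2 * sqrt (kk j))).
  assert (Hrr : forall j, (j <= l1)%nat -> 0 < rr j).
  { intros j Hj. unfold rr. apply Rdiv_lt_0_compat; [lra|]. specialize (Hsk j Hj). lra. }
  assert (Hrrm : forall i j, (i <= j <= l1)%nat -> rr i <= rr j).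
  { intros i j Hij. unfold rr. apply div_mono; [lra | apply Hsk; lia | apply Hskm; lia]. }
  assert (HF : forall j, (j <= l1)%nat ->
    Cre (rho mu n j) ^ 2 + Cim (rho mu n j) ^ 2 = 1 /\ 0 < Cre (rho mu n j) /\
    0 < Cim (rho mu n j) /\ Cre (rho mu n j) / Cim (rho mu n j) = rr j).
  { intros j Hj. apply rho_facts; auto. apply (Hkpos j Hj). }
  assert (HF2 : forall j, (j <= l1)%nat ->
    Cre (Cmul (rho mu n j) (rho mu n j)) / Cim (Cmul (rho mu n j) (rho mu n j))
      = (rr j - / rr j) / 2).
  { intros j Hj. destruct (HF j Hj) as [_ [? [? ?]]]. rewrite ratio2 by lra. congruence. }
  destruct (Nat.lt_exists_pred 0 (l1 - l0)) as [m [Hm _]]; [lia|].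
  assert (El1 : l1 = (S m + l0)%nat) by lia.
  assert (El1' : (l1 - 1)%nat = (m + l0)%nat) by lia.
  rewrite El1' . rewrite El1.
  rewrite !csum_shift, !sum_f_shift.
  rewrite <- El1.
  split.
  - set (K := fun j => 1 + 2 * Rabs (- (Cre (rho mu n j) / Cim (rho mu n j))/2)
                 + 2 * Rabs (- (Cre (rho mu n l0) / Cim (rho mu n l0))/2)).
    assert (HK : forall j, (l0 <= j <= l1)%nat -> K j <= 3 * (mu / sqrt (kk j) + 1)).
    { intros j Hj. unfold K. destruct (HF j ltac:(lia)) as [_ [_ [_ E1]]].
      destruct (HF l0 ltac:(lia)) as [_ [_ [_ E2]]]. rewrite E1, E2.
      pose proof (Hrr j ltac:(lia)). pose proof (Hrr l0 ltac:(lia)).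
      pose proof (Hrrm l0 j ltac:(lia)).
      rewrite !Rabs_left by lra.
      assert (mu / sqrt (kk j) = 2 * rr j).
      { unfold rr. field. pose proof (Hsk j ltac:(lia)). lra. }
      lra. }
    eapply Rle_trans.
    + apply (outer g (eta mu n) K l0 m).
      intros i Hi.
      apply (partial_gen (rho mu n) (Eeta mu n) l0 l1); auto; try lia.
      * intros j Hj. destruct j; [|reflexivity].
        apply Cx_eq; cbv [Eeta eta Cmul Cre Cim fst snd]; ring.
      * intros j Hj. destruct (HF j Hj) as [? [? [? ?]]]. split; lra.
      * intros j Hj. destruct (HF j ltac:(lia)) as [_ [_ [_ E1]]].
        destruct (HF (S j) ltac:(lia)) as [_ [_ [_ E2]]]. rewrite E1, E2.
        apply Hrrm; lia.
    + rewrite scal_sum. apply Rplus_le_compat.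
      * rewrite <- El1.
        apply Rmult_le_compat_r; [apply Cmod_ge0| apply HK; lia].
      * apply sum_Rle. intros t Ht. cbv beta.
        pose proof (Cmod_ge0 (Csub (g (S (t + l0)%nat)) (g (t + l0)%nat))) as Q1.
        pose proof (HK (t + l0)%nat ltac:(lia)) as Q2. rewrite (Rmult_comm _ 3), <- Rmult_assoc. apply Rmult_le_compat_r; [exact Q1 | exact Q2].
  - set (K := fun j => 1 + 2 * Rabs (- (Cre (Cmul (rho mu n j) (rho mu n j)) / Cim (Cmul (rho mu n j) (rho mu n j)))/2)
                 + 2 * Rabs (- (Cre (Cmul (rho mu n l0) (rho mu n l0)) / Cim (Cmul (rho mu n l0) (rho mu n l0)))/2)).
    assert (HK : forall j, (l0 <= j <= l1)%nat ->
        K j <= 3 * (mu / sqrt (kk j) + sqrt (kk l0) / mu)).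
    { intros j Hj. unfold K. rewrite !HF2 by lia.
      pose proof (Hrr j ltac:(lia)) as Pj. pose proof (Hrr l0 ltac:(lia)) as P0.
      pose proof (Hrrm l0 j ltac:(lia)) as Mo.
      assert (I1 : / rr j <= / rr l0) by (apply Rinv_le_contravar; lra).
      assert (0 < / rr j) by (apply Rinv_0_lt_compat; lra).
      assert (0 < / rr l0) by (apply Rinv_0_lt_compat; lra).
      assert (rr l0 * / rr l0 = 1) by (field; lra).
      assert (mu / sqrt (kk j) = 2 * rr j).
      { unfold rr. field. pose proof (Hsk j ltac:(lia)). lra. }
      assert (sqrt (kk l0) / mu = / rr l0 / 2).
      { unfold rr. field. pose proof (Hsk l0 ltac:(lia)). lra. }
      rewrite H2, H3.
      assert (A1 : forall x y, 0 < x -> 0 < y -> Rabs (- ((x - y)/2)/2) <= (x + y)/4).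
      { intros x y Hx Hy. apply Rabs_le. lra. }
      pose proof (A1 (rr j) (/ rr j) Pj H).
      pose proof (A1 (rr l0) (/ rr l0) P0 H0).
      pose proof (pow2_ge_0 (rr l0 - / rr l0)).
      nra. }
    eapply Rle_trans.
    + apply (outer g (fun l => Cmul (eta mu n l) (eta mu n l)) K l0 m).
      intros i Hi.
      apply (partial_gen (fun j => Cmul (rho mu n j) (rho mu n j)) (Eeta2 mu n) l0 l1); auto; try lia.
      * intros j Hj. destruct j.
        -- apply Cx_eq; cbv [Eeta2 eta Cmul Cre Cim fst snd]; ring.
        -- apply Cx_eq; cbv [Eeta2 eta Cmul Cre Cim fst snd]; ring.
      * intros j Hj. destruct (HF j Hj) as [? [? [? ?]]]. split.
        -- apply unit2; auto.
        -- cbv [Cmul Cre Cim fst snd] in *. nra.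
      * intros j Hj. rewrite !HF2 by lia.
        pose proof (Hrr j ltac:(lia)). pose proof (Hrr (S j) ltac:(lia)).
        pose proof (Hrrm j (S j) ltac:(lia)).
        assert (/ rr (S j) <= / rr j) by (apply Rinv_le_contravar; lra). lra.
    + rewrite scal_sum. apply Rplus_le_compat.
      * rewrite <- El1.
        apply Rmult_le_compat_r; [apply Cmod_ge0| apply HK; lia].
      * apply sum_Rle. intros t Ht. cbv beta.
        pose proof (Cmod_ge0 (Csub (g (S (t + l0)%nat)) (g (t + l0)%nat))) as Q1.
        pose proof (HK (t + l0)%nat ltac:(lia)) as Q2. rewrite (Rmult_comm _ 3), <- Rmult_assoc. apply Rmult_le_compat_r; [exact Q1 | exact Q2].
Qed.
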